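(* Let $G$ be the free group on the generators $\vec{s}=(s_n)_{n\in\omega}$ and $S\subseteq G$ the free semigroup on the same generators. Let $p$ be a very strongly productive ultrafilter on $S$ (regarded as an ultrafilter on $G$). If $q,r\in\beta G$ satisfy $qr=p$, then there is $w\in G$ such that one of the following holds: (1) $r=wp$ and $q=pw^{-1}$; (2) $r=w$ and $q=pw^{-1}$; (3) $r=wp$ and $q=w^{-1}$. In particular, if $q,r\in G^*$ and $qr=p$, then $r=wp$ and $q=pw^{-1}$ for some $w\in G$.
   Context: $\beta G$ is the set of ultrafilters on $G$, with elements of $G$ identified with principal ultrafilters and $G^*=\beta G\setminus G$ the nonprincipal ones. The product in $\beta G$ is defined by $A\in qr$ iff $\{x\in G: x^{-1}A\in r\}\in q$, where $x^{-1}A=\{y: xy\in A\}$; thus e.g. $wp=\{A: w^{-1}A\in p\}$ and $pw^{-1}=\{A: Aw\in p\}$. For a sequence $\vec{x}$ in $S$, $\mathrm{FP}(\vec{x})$ is the set of products $\prod_{i\in a}x_i$ (increasing order of indices), $a$ a finite nonempty subset of $\omega$. A sequence $\vec{y}$ is a product subsystem of $\vec{x}$ if there are finite nonempty $a_n\subseteq\omega$ with $\max a_n<\min a_{n+1}$ and $y_n=\prod_{i\in a_n}x_i$. An ultrafilter $p$ on $S$ is very strongly productive if every $A\in p$ contains some $\mathrm{FP}(\vec{x})\in p$ with $\vec{x}$ a product subsystem of $\vec{s}$. *)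

(* Defs.v *)
From mathcomp Require Import all_boot.
Set Implicit Arguments. Unset Strict Implicit. Unset Printing Implicit Defensive.

(* A letter (n, true) is s_n, a letter (n, false) is s_n^{-1}. *)
Definition letter := (nat * bool)%type.

Definition cancels (x y : letter) : bool := (x.1 == y.1) && (x.2 != y.2).

Fixpoint reduce (w : seq letter) : seq letter :=
  match w with
  | [::] => [::]
  | x :: t =>
      match reduce t with
      | [::] => [:: x]
      | y :: t' => if cancels x y then t' else x :: y :: t'
      end
  end.

Fixpoint isred (w : seq letter) : bool :=
  match w with
  | x :: ((y :: _) as t) => ~~ cancels x y && isred t
  | _ => true
  end.

Lemma isred_cons x t : isred (x :: t) -> isred t.
Proof. by case: t => [|y t] //= /andP[]. Qed.

Lemma isred_reduce w : isred (reduce w).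
Proof.
elim: w => [|x t IH] //=.
case E: (reduce t) => [|y t'] //=; rewrite E in IH.
case: ifP => [_|hc]; first exact: (isred_cons IH).
by rewrite /= hc /=.
Qed.

(* reduced words = elements of the free group *)
Definition FG := {w : seq letter | isred w}.

Definition fg_of (w : seq letter) : FG := exist _ (reduce w) (isred_reduce w).

Definition fg_one : FG := exist (fun w => isred w) [::] isT.
Definition fg_mul (a b : FG) : FG := fg_of (proj1_sig a ++ proj1_sig b).
Definition fg_inv (a : FG) : FG :=
  fg_of (rev (map (fun x : letter => (x.1, ~~ x.2)) (proj1_sig a))).

Definition gen (n : nat) : FG := fg_of [:: (n, true)].

(* the free semigroup S generated by the s_n: nonempty positive words *)
Definition inS (g : FG) : Prop :=
  proj1_sig g <> [::] /\ all (fun x : letter => x.2) (proj1_sig g).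

Definition set_ (T : Type) := T -> Prop.

Definition ultrafilter (U : set_ FG -> Prop) : Prop :=
  [/\ U (fun _ => True),
      ~ U (fun _ => False),
      (forall A B : set_ FG, U A -> (forall x, A x -> B x) -> U B),
      (forall A B : set_ FG, U A -> U B -> U (fun x => A x /\ B x))
    & (forall A : set_ FG, U A \/ U (fun x => ~ A x))].

(* principal ultrafilter at w (identification of G inside beta G) *)
Definition principal (w : FG) : set_ FG -> Prop := fun A => A w.

Definition nonprincipal (U : set_ FG -> Prop) : Prop :=
  forall w : FG, ~ (forall A, U A <-> principal w A).

Definition ltrans (x : FG) (A : set_ FG) : set_ FG := fun y => A (fg_mul x y).

Definition uf_mul (q r : set_ FG -> Prop) : set_ FG -> Prop :=
  fun A => q (fun x => r (ltrans x A)).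

Definition uf_eq (U V : set_ FG -> Prop) : Prop := forall A, U A <-> V A.

(* finite nonempty index sets, listed in increasing order *)
Definition fin_index (a : seq nat) : Prop := a <> [::] /\ sorted ltn a.

Definition seq_prod (x : nat -> FG) (a : seq nat) : FG :=
  foldr (fun i acc => fg_mul (x i) acc) fg_one a.

Definition FP (x : nat -> FG) : set_ FG :=
  fun g => exists a, fin_index a /\ g = seq_prod x a.

Definition product_subsystem (y x : nat -> FG) : Prop :=
  exists a : nat -> seq nat,
    (forall n, fin_index (a n)) /\
    (forall n, last 0 (a n) < head 0 (a n.+1)) /\
    (forall n, y n = seq_prod x (a n)).

(* p (an ultrafilter on G containing S, i.e. an ultrafilter on S) is very
   strongly productive w.r.t. the generating sequence gen *)
Definition very_strongly_productive (p : set_ FG -> Prop) : Prop :=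
  forall A : set_ FG, p A ->
    exists x : nat -> FG, product_subsystem x gen /\ p (FP x) /\
      (forall g, FP x g -> A g).

(* Main.v *)
Require Import Defs.
From mathcomp Require Import all_boot.
From Stdlib Require Import Classical.
Set Implicit Arguments. Unset Strict Implicit. Unset Printing Implicit Defensive.

Definition wd (g : FG) : seq letter := proj1_sig g.

Lemma fg_eq (a b : FG) : wd a = wd b -> a = b.
Proof.
case: a b => [a Ha] [b Hb] /= E; rewrite /wd /= in E; subst b.
by rewrite (bool_irrelevance Ha Hb).
Qed.

Definition push (x : letter) (s : seq letter) : seq letter :=
  match s with
  | [::] => [:: x]
  | y :: s' => if cancels x y then s' else x :: y :: s'
  end.

Lemma reduce_cons x t : reduce (x :: t) = push x (reduce t).
Proof. by []. Qed.

Lemma isred_push x s : isred s -> isred (push x s).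
Proof.
case: s => [|y s] //= H; case: ifP => hc; first exact: (isred_cons H).
by rewrite /= hc.
Qed.

Lemma reduce_id w : isred w -> reduce w = w.
Proof.
elim: w => [|x t IH] // H; rewrite reduce_cons IH; last exact: (isred_cons H).
case: t H {IH} => [|y t] //= /andP[hc _]; by rewrite (negbTE hc).
Qed.

Lemma reduce_cat a b : reduce (a ++ b) = foldr push (reduce b) a.
Proof. by elim: a => [|x a IH] //=; rewrite -IH. Qed.

Lemma isred_foldr s l : isred s -> isred (foldr push s l).
Proof. by move=> H; elim: l => [|x l IH] //=; apply: isred_push. Qed.

Lemma cancels_inv x y z : cancels x y -> cancels y z -> z = x.
Proof.
case: x y z => [i b] [j c] [k d]; rewrite /cancels /= => /andP[/eqP-> h1] /andP[/eqP-> h2].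
by case: b c d h1 h2 => [] [] [].
Qed.

Lemma push_push x y u : cancels x y -> isred u -> push x (push y u) = u.
Proof.
move=> cxy; case: u => [|z u] /=; first by rewrite cxy.
move=> H; case: ifP => cyz.
  move: H; rewrite (cancels_inv cxy cyz); case: u => [|z' u] //= /andP[h _].
  by rewrite (negbTE h).
by rewrite /= ?cxy.
Qed.

Lemma foldr_push_push s r x : isred r -> isred s ->
  foldr push s (push x r) = push x (foldr push s r).
Proof.
case: r => [|y r] //= Hr Hs; case: ifP => // cxy.
by rewrite push_push //; apply: isred_foldr.
Qed.

Lemma foldr_reduce s a : isred s -> foldr push s (reduce a) = foldr push s a.
Proof.
move=> Hs; elim: a => [|x a IH] //; rewrite reduce_cons foldr_push_push //.
  by rewrite IH.
exact: isred_reduce.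
Qed.

Lemma reduce_catr a b : reduce (a ++ reduce b) = reduce (a ++ b).
Proof. by rewrite !reduce_cat reduce_id // isred_reduce. Qed.

Lemma reduce_catl a b : reduce (reduce a ++ b) = reduce (a ++ b).
Proof. by rewrite !reduce_cat foldr_reduce // isred_reduce. Qed.

Lemma fg_mulA a b c : fg_mul (fg_mul a b) c = fg_mul a (fg_mul b c).
Proof. by apply: fg_eq; rewrite /wd /= reduce_catl reduce_catr catA. Qed.

Lemma fg_mul1g a : fg_mul fg_one a = a.
Proof. by apply: fg_eq; rewrite /wd /= reduce_id //; case: a. Qed.

Lemma fg_mulg1 a : fg_mul a fg_one = a.
Proof. by apply: fg_eq; rewrite /wd /= cats0 reduce_id //; case: a. Qed.

Definition flip (x : letter) : letter := (x.1, ~~ x.2).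
Definition winv (w : seq letter) := rev (map flip w).

Lemma winv_cons x w : winv (x :: w) = winv w ++ [:: flip x].
Proof. by rewrite /winv /= rev_cons cats1. Qed.

Lemma winvK w : winv (winv w) = w.
Proof.
rewrite /winv map_rev revK -map_comp map_id_in // => x _.
by case: x => i b /=; rewrite /flip /= negbK.
Qed.

Lemma cancels_flip x : cancels x (flip x).
Proof. by case: x => i b; rewrite /cancels /= eqxx; case: b. Qed.

Lemma foldr_winv s a : isred s -> foldr push s (a ++ winv a) = s.
Proof.
elim: a s => [|x a IH] s Hs //=.
rewrite winv_cons catA foldr_cat /= IH; last exact: isred_push.
by rewrite push_push // cancels_flip.
Qed.

Lemma reduce_winv a : reduce (a ++ winv a) = [::].
Proof. by rewrite -[a ++ winv a]cats0 reduce_cat /= foldr_winv. Qed.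

Lemma fg_mulV a : fg_mul a (fg_inv a) = fg_one.
Proof.
apply: fg_eq; rewrite /wd /= reduce_catr; exact: reduce_winv.
Qed.

Lemma fg_mulVg a : fg_mul (fg_inv a) a = fg_one.
Proof.
apply: fg_eq; rewrite /wd /= reduce_catl.
by have := reduce_winv (winv (proj1_sig a)); rewrite winvK.
Qed.

Lemma cancels_eq_flip x z : cancels x z -> z = flip x.
Proof.
case: x z => [i b] [j c]; rewrite /cancels /flip /= => /andP[/eqP-> h].
by case: b c h => [] [].
Qed.

Lemma cancel_split a t : isred a -> isred t ->
  exists u v t2, [/\ a = u ++ v, t = winv v ++ t2 & reduce (a ++ t) = u ++ t2].
Proof.
move=> Ha Ht; rewrite reduce_cat (reduce_id Ht).
elim: a Ha => [|x a IH] Ha.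
  by exists [::], [::], t.
have [u [v [t2 [E1 E2 E3]]]] := IH (isred_cons Ha).
rewrite /= E3.
case: u E1 E3 => [|y u] E1 E3.
  rewrite /= in E1; subst a.
  case: t2 E2 E3 => [|z t3] E2 E3.
    by exists [:: x], v, [::].
  rewrite /=; case: ifP => cxz.
    exists [::], (x :: v), t3; split => //.
    by rewrite E2 winv_cons -catA (cancels_eq_flip cxz).
  by exists [:: x], v, (z :: t3).
have nc : cancels x y = false.
  by move: Ha; rewrite E1 /= => /andP[/negbTE].
by exists [:: x, y & u], v, t2; rewrite /= nc E1.
Qed.

Lemma allsnd_isred w : all snd w -> isred w.
Proof.
elim: w => [|x t IH] // /= /andP[hx ht].
case: t IH ht => [|y t] // IH ht.
rewrite IH // andbT /cancels; move: ht => /= /andP[hy _]; by rewrite hx hy andbF.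
Qed.

Definition pos (i : nat) : letter := (i, true).

Lemma posw w : all snd w -> w = map pos (map fst w).
Proof.
elim: w => [|[i b] w IH] //= /andP[/= hb hw].
by rewrite -IH // hb.
Qed.

Lemma all_snd_pos s : all snd (map pos s).
Proof. by elim: s. Qed.

Lemma map_fst_pos s : map fst (map pos s) = s.
Proof. by elim: s => //= i s ->. Qed.

Lemma pos_inj : injective pos.
Proof. by move=> i j [] . Qed.

Lemma wd_mul_pos (u v : FG) : all snd (wd u) -> all snd (wd v) ->
  wd (fg_mul u v) = wd u ++ wd v.
Proof.
move=> hu hv; rewrite /fg_mul /fg_of /wd /= reduce_id //.
by apply: allsnd_isred; rewrite all_cat hu hv.
Qed.

Lemma wd_seq_prod (x : nat -> FG) b : (forall n, all snd (wd (x n))) ->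
  wd (seq_prod x b) = flatten (map (fun n => wd (x n)) b).
Proof.
move=> hx; elim: b => [|n b IH] //.
have -> : seq_prod x (n :: b) = fg_mul (x n) (seq_prod x b) by [].
rewrite wd_mul_pos; [by rewrite IH | by [] |].
rewrite IH; elim: (b) => //= m b' IHb; by rewrite all_cat hx IHb.
Qed.

Lemma wd_gen i : wd (gen i) = [:: pos i].
Proof. by []. Qed.

Lemma wd_seq_prod_gen s : wd (seq_prod gen s) = map pos s.
Proof.
rewrite wd_seq_prod //; elim: s => //= i s ->; by [].
Qed.

Lemma wd_blocks (x : nat -> FG) (a : nat -> seq nat) b :
  (forall n, x n = seq_prod gen (a n)) ->
  wd (seq_prod x b) = map pos (flatten (map a b)).
Proof.
move=> hx; rewrite wd_seq_prod; last by move=> n; rewrite hx wd_seq_prod_gen all_snd_pos.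
elim: b => //= n b ->; by rewrite hx wd_seq_prod_gen map_cat.
Qed.

Section UF.
Variable U : set_ FG -> Prop.
Hypothesis HU : ultrafilter U.

Lemma uf_up (A B : set_ FG) : U A -> (forall x, A x -> B x) -> U B.
Proof. by case: HU => _ _ h _ _; apply: h. Qed.

Lemma uf_and (A B : set_ FG) : U A -> U B -> U (fun x => A x /\ B x).
Proof. by case: HU => _ _ _ h _; apply: h. Qed.

Lemma uf_T : U (fun _ => True).
Proof. by case: HU. Qed.

Lemma uf_ne (A : set_ FG) : U A -> exists x, A x.
Proof.
move=> hA; apply: NNPP => hn; case: HU => _ hF _ _ _; apply: hF.
by apply: (uf_up hA) => x ax; apply: hn; exists x.
Qed.

Lemma uf_dich (A : set_ FG) : U A \/ U (fun x => ~ A x).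
Proof. by case: HU. Qed.

Lemma uf_not (A : set_ FG) : ~ U A -> U (fun x => ~ A x).
Proof. by case: (uf_dich A). Qed.

Lemma uf_notboth (A : set_ FG) : U A -> U (fun x => ~ A x) -> False.
Proof. move=> h1 h2; have [x [h h']] := uf_ne (uf_and h1 h2); exact: h' h. Qed.

Lemma uf_iff (A B : set_ FG) : (forall x, A x <-> B x) -> (U A <-> U B).
Proof. by move=> h; split=> hh; apply: (uf_up hh) => x /h. Qed.

Lemma uf_nonprinc w : nonprincipal U -> U (fun x => x <> w).
Proof.
move=> hn; case: (uf_dich (fun x => x <> w)) => // h; exfalso; apply: (hn w) => A.
rewrite /principal; split=> hA.
  apply: NNPP => nA; have [x [ax hx]] := uf_ne (uf_and hA h).
  have ex : x = w by apply: NNPP.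
  by apply: nA; rewrite -ex.
by apply: (uf_up h) => x hx; have -> : x = w by apply: NNPP.
Qed.

Lemma uf_fin (P : set_ FG) (Q : nat -> set_ FG) N :
  U P -> (forall x, P x -> exists k, k <= N /\ Q k x) ->
  exists k, k <= N /\ U (Q k).
Proof.
elim: N P => [|N IH] P hP hQ.
  exists 0; split => //; apply: (uf_up hP) => x /hQ [k [hk hq]].
  by move: hk; rewrite leqn0 => /eqP <-.
case: (uf_dich (Q N.+1)) => h; first by exists N.+1.
have [|k [hk hq]] := IH _ (uf_and hP h).
  move=> x [px nq]; have [k [hk qk]] := hQ x px.
  exists k; split => //; rewrite leq_eqVlt in hk; case/orP: hk => [/eqP ek|] //.
  by rewrite ek in qk.
by exists k; split => //; apply: leqW.
Qed.

End UF.

Lemma ue_of_sub (U V : set_ FG -> Prop) : ultrafilter U ->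
  (forall A, V A \/ V (fun x => ~ A x)) -> (forall A, V A -> U A) -> uf_eq U V.
Proof.
move=> hU hV hs A; split; last exact: hs; move=> hA.
case: (hV A) => // /hs h; exfalso; exact: (uf_notboth hU hA h).
Qed.

Lemma uf_img (U : set_ FG -> Prop) (h : FG -> FG) : ultrafilter U ->
  ultrafilter (fun A => U (fun x => A (h x))).
Proof.
case=> h1 h2 h3 h4 h5; split => //.
  by move=> A B hA hAB; apply: (h3 _ _ hA) => x; apply: hAB.
by move=> A B hA hB; exact: (h4 (fun x => A (h x)) (fun x => B (h x))).
Qed.

Lemma uf_principal w : ultrafilter (principal w).
Proof.
split => //; rewrite /principal.
  by move=> A B hA hAB; apply: hAB.
by move=> A; exact: (classic (A w)).
Qed.

Lemma uf_eq_sym U V : uf_eq U V -> uf_eq V U.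
Proof. by move=> h A; split => /h. Qed.

Lemma uf_eq_trans U V W : uf_eq U V -> uf_eq V W -> uf_eq U W.
Proof. by move=> h1 h2 A; rewrite h1 h2. Qed.

Lemma path_last_ge x s i : path ltn x s -> i \in x :: s -> i <= last x s.
Proof.
elim: s x i => [|y s IH] x i /=; first by rewrite inE => _ /eqP->.
case/andP=> hxy hp; rewrite inE => /orP[/eqP->|hi].
  by apply: leq_trans (ltnW hxy) (IH _ _ hp (mem_head _ _)).
exact: IH.
Qed.

Lemma sorted_bounds s i : sorted ltn s -> i \in s -> head 0 s <= i <= last 0 s.
Proof.
case: s => [|x s] //= hp hi; apply/andP; split; last exact: path_last_ge.
move: hi; rewrite inE => /orP[/eqP->|hi] //.
by apply: ltnW; have := order_path_min ltn_trans hp => /allP /(_ _ hi).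
Qed.

Section Blocks.
Variable a : nat -> seq nat.
Hypothesis Hfin : forall n, fin_index (a n).
Hypothesis Hlt : forall n, last 0 (a n) < head 0 (a n.+1).

Lemma bl_sorted n : sorted ltn (a n).
Proof. by case: (Hfin n). Qed.

Lemma bl_head_mem n : head 0 (a n) \in a n.
Proof. by case: (Hfin n); case: (a n) => // x s _ _; rewrite mem_head. Qed.

Lemma bl_bounds n i : i \in a n -> head 0 (a n) <= i <= last 0 (a n).
Proof. exact/sorted_bounds/bl_sorted. Qed.

Lemma bl_hl n : head 0 (a n) <= last 0 (a n).
Proof. by case/andP: (bl_bounds (bl_head_mem n)) => _. Qed.

Lemma bl_lt m n : m < n -> last 0 (a m) < head 0 (a n).
Proof.
elim: n => [|n IH] //; rewrite ltnS leq_eqVlt => /orP[/eqP->|h]; first exact: Hlt.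
by apply: ltn_trans (IH h) (leq_ltn_trans (bl_hl n) (Hlt n)).
Qed.

Lemma bl_head_ge n : n <= head 0 (a n).
Proof.
elim: n => [|n IH] //; apply: leq_ltn_trans (Hlt n).
by apply: leq_trans IH (bl_hl n).
Qed.

Lemma bl_last_ge n : n <= last 0 (a n).
Proof. exact: leq_trans (bl_head_ge n) (bl_hl n). Qed.

Lemma bl_last_mono m n : m <= n -> last 0 (a m) <= last 0 (a n).
Proof.
rewrite leq_eqVlt => /orP[/eqP->|h] //.
by apply: ltnW; apply: leq_trans (bl_lt h) (bl_hl n).
Qed.

Lemma bl_uniq m n i : i \in a m -> i \in a n -> m = n.
Proof.
move=> hm hn; case: (ltngtP m n) => // h.
  have := bl_lt h; case/andP: (bl_bounds hm) => _ h1; case/andP: (bl_bounds hn) => h2 _.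
  by move=> h3; have := leq_ltn_trans h1 (leq_trans h3 h2); rewrite ltnn.
have := bl_lt h; case/andP: (bl_bounds hn) => _ h1; case/andP: (bl_bounds hm) => h2 _.
by move=> h3; have := leq_ltn_trans h1 (leq_trans h3 h2); rewrite ltnn.
Qed.

Lemma bl_filter_gt N b :
  [seq i <- flatten (map a b) | last 0 (a N) < i] =
  flatten (map a [seq n <- b | N < n]).
Proof.
elim: b => [|m b IH] //=; rewrite filter_cat IH; case: ifP => hm /=.
  congr (_ ++ _); apply/all_filterP/allP => i /bl_bounds /andP[h _].
  exact: leq_trans (bl_lt hm) h.
rewrite (_ : [seq i <- a m | last 0 (a N) < i] = [::]) //.
apply/eqP; apply: negbNE; rewrite -has_filter; apply/hasPn => i /bl_bounds /andP[_ h].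
rewrite -leqNgt; apply: leq_trans h _; apply: bl_last_mono.
by rewrite leqNgt hm.
Qed.

Lemma bl_filter_le N b :
  [seq i <- flatten (map a b) | i <= last 0 (a N)] =
  flatten (map a [seq n <- b | n <= N]).
Proof.
elim: b => [|m b IH] //=; rewrite filter_cat IH; case: ifP => hm /=.
  congr (_ ++ _); apply/all_filterP/allP => i /bl_bounds /andP[_ h].
  exact: leq_trans h (bl_last_mono hm).
rewrite (_ : [seq i <- a m | i <= last 0 (a N)] = [::]) //.
apply/eqP; apply: negbNE; rewrite -has_filter; apply/hasPn => i /bl_bounds /andP[h _].
rewrite -ltnNge; apply: leq_trans (bl_lt _) h.
by rewrite ltnNge hm.
Qed.

Lemma bl_flatten_sorted b : sorted ltn b -> sorted ltn (flatten (map a b)).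
Proof.
elim: b => [|n b IH] //= hp; rewrite sorted_pairwise; last exact: ltn_trans.
rewrite pairwise_cat -!sorted_pairwise; try exact: ltn_trans.
rewrite bl_sorted IH ?(path_sorted hp) // !andbT.
apply/allrelP => i j hi /flatten_mapP [m hm hj].
have hnm : n < m by have := order_path_min ltn_trans hp => /allP /(_ _ hm).
case/andP: (bl_bounds hi) => _ h1; case/andP: (bl_bounds hj) => h2 _.
exact: leq_ltn_trans h1 (leq_trans (bl_lt hnm) h2).
Qed.

End Blocks.

Definition idx (g : FG) : seq nat := map fst (wd g).

Lemma leq_sumn_mem (s : seq nat) i : i \in s -> i <= sumn s.
Proof.
elim: s => [|x s IH] //=; rewrite inE => /orP[/eqP->|/IH h]; first exact: leq_addr.
exact: leq_trans h (leq_addl _ _).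
Qed.

Lemma no_cancel u v : isred u -> isred v ->
  (forall x y, x \in u -> y \in v -> x.1 <> y.1) -> reduce (u ++ v) = u ++ v.
Proof.
move=> hu hv hd; have [u' [v0 [t2 [E1 E2 E3]]]] := cancel_split hu hv.
case: v0 E1 E2 => [|x v0] E1 E2.
  by rewrite E3 E1 E2 cats0.
exfalso; apply: (hd x (flip x)) => //.
  by rewrite E1 mem_cat mem_head orbT.
by rewrite E2 mem_cat /winv mem_rev; apply/orP; left; apply: map_f; rewrite mem_head.
Qed.

Lemma fg_oneP (c : FG) : wd c = [::] -> c = fg_one.
Proof. by move=> h; apply: fg_eq. Qed.

Lemma head_cat_ne (s t : seq nat) : s <> [::] -> head 0 (s ++ t) = head 0 s.
Proof. by case: s. Qed.

Lemma last_cat_ne (s t : seq nat) : t <> [::] -> last 0 (s ++ t) = last 0 t.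
Proof. by rewrite last_cat; case: t. Qed.

Section P.
Variable p : set_ FG -> Prop.
Hypothesis Hp : ultrafilter p.
Hypothesis Hv : very_strongly_productive p.

Lemma vsp' A : p A -> exists x a,
  [/\ (forall n, fin_index (a n)), (forall n, last 0 (a n) < head 0 (a n.+1)),
      (forall n, x n = seq_prod gen (a n)), p (FP x) & (forall g, FP x g -> A g)].
Proof.
move=> /Hv [x [[a [h1 [h2 h3]]] [h4 h5]]].
by exists x, a; split.
Qed.

Lemma p_abv K : p (fun g => forall i, i \in idx g -> K < i).
Proof.
apply: NNPP => /(uf_not Hp) /vsp' [x [a [h1 h2 h3 h4 h5]]].
apply: (h5 (seq_prod x [:: K.+1])); first by exists [:: K.+1]; split.
move=> i; rewrite /idx (wd_blocks _ h3) /= cats0 map_fst_pos => hi.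
case/andP: (bl_bounds h1 hi) => hh _; exact: leq_trans (bl_head_ge h1 h2 K.+1) hh.
Qed.

Lemma p_Ipos : p (fun g => all snd (wd g) /\ sorted ltn (idx g)).
Proof.
have [x [a [h1 h2 h3 h4 h5]]] := vsp' (uf_T Hp).
apply: (uf_up Hp h4) => g [b [[_ hb] ->]].
rewrite /idx (wd_blocks _ h3) map_fst_pos all_snd_pos; split => //.
exact: bl_flatten_sorted.
Qed.

Definition Goodl (C : nat -> Prop) (s : seq nat) :=
  forall i, head 0 s <= i -> i <= last 0 s -> (i \in s <-> C i).
Definition Good C (g : FG) := exists s, wd g = map pos s /\ Goodl C s.

Lemma p_notGood C : ~ p (Good C).
Proof.
move=> /vsp' [x [a [h1 h2 h3 h4 h5]]].
have [s02 [E02 G02]] : Good C (seq_prod x [:: 0; 2]) by apply: h5; exists [:: 0; 2].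
have [s1 [E1 G1]] : Good C (seq_prod x [:: 1]) by apply: h5; exists [:: 1].
rewrite (wd_blocks _ h3) /= cats0 in E02; rewrite (wd_blocks _ h3) /= cats0 in E1.
have {}E02 := inj_map pos_inj E02; have {}E1 := inj_map pos_inj E1; subst s02 s1.
set i := head 0 (a 1).
have hi : i \in a 1 by exact: bl_head_mem h1 1.
have Ci : C i by case/andP: (bl_bounds h1 hi) => u v; apply/(G1 _ u v).
have nh : i \notin a 0 ++ a 2.
  rewrite mem_cat; apply/negP => /orP[] h.
    by have := bl_uniq h1 h2 h hi.
  by have := bl_uniq h1 h2 h hi.
have ne0 : a 0 <> [::] by case: (h1 0).
have ne2 : a 2 <> [::] by case: (h1 2).
case/negP: nh; apply/(G02 i) => //.
  rewrite head_cat_ne //; apply: ltnW; apply: leq_ltn_trans (bl_hl h1 0) _.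
  exact: (bl_lt h1 h2 (m := 0) (n := 1)).
rewrite last_cat_ne //; apply: leq_trans (bl_hl h1 2).
case/andP: (bl_bounds h1 hi) => _ hh; apply: ltnW; apply: leq_ltn_trans hh _.
exact: (bl_lt h1 h2 (m := 1) (n := 2)).
Qed.

Lemma FP_wd x a : (forall n, x n = seq_prod gen (a n)) -> forall g, FP x g ->
  exists b, fin_index b /\ wd g = map pos (flatten (map a b)).
Proof. by move=> h3 g [b [hb ->]]; exists b; split => //; rewrite (wd_blocks _ h3). Qed.

Lemma keyM x a : (forall n, fin_index (a n)) ->
  (forall n, last 0 (a n) < head 0 (a n.+1)) ->
  (forall n, x n = seq_prod gen (a n)) ->
  forall c, c <> fg_one -> p (fun z => FP x (fg_mul c z)) -> FP x c.
Proof.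
move=> h1 h2 h3 c hc hp.
set M := sumn (idx c); set K := last 0 (a M).
have hM : M <= K by apply: bl_last_ge.
have [z [[fcz az] fz]] := uf_ne Hp (uf_and Hp (uf_and Hp hp (p_abv K)) (p_Ipos)).
have [bcz [[_ hbs] Ecz]] := FP_wd h3 fcz.
rewrite /fg_mul /fg_of /wd /= in Ecz.
rewrite no_cancel in Ecz; first last.
- move=> u v hu hv; have h1u : u.1 \in idx c by apply: map_f.
  have h1v : v.1 \in idx z by apply: map_f.
  move=> e; have := az _ h1v; rewrite -e ltnNge.
  by rewrite (leq_trans (leq_sumn_mem h1u) hM).
- exact: (proj2_sig z).
- exact: (proj2_sig c).
have Ecz' := congr1 (map fst) Ecz; rewrite map_cat map_fst_pos in Ecz'.
have hpos : all snd (wd c).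
  by have := all_snd_pos (flatten (map a bcz)); rewrite -Ecz all_cat => /andP[].
have F := congr1 (filter (fun i => i <= K)) Ecz'.
rewrite filter_cat bl_filter_le // in F.
rewrite (_ : [seq i <- map fst (wd z) | i <= K] = [::]) in F; last first.
  apply/eqP; apply: negbNE; rewrite -has_filter; apply/hasPn => i hi.
  by rewrite -ltnNge; apply: az.
rewrite cats0 (_ : [seq i <- map fst (wd c) | i <= K] = map fst (wd c)) in F; last first.
  apply/all_filterP/allP => i hi; exact: leq_trans (leq_sumn_mem hi) hM.
exists [seq n <- bcz | n <= M]; split; last first.
  apply: fg_eq; rewrite (wd_blocks _ h3) -F; exact: posw.
split; last first.
  by apply: sorted_filter => //; exact: ltn_trans.
move=> e; apply: hc; apply: fg_oneP; by rewrite (posw hpos) F e.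
Qed.

Lemma lemM q : ultrafilter q -> uf_eq (uf_mul q p) p ->
  uf_eq q (principal fg_one) \/ uf_eq q p.
Proof.
move=> hq he; case: (uf_dich hq (fun x => x <> fg_one)) => h.
  right; apply: ue_of_sub => //; first exact: (uf_dich Hp).
  move=> A /vsp' [x [a [h1 h2 h3 h4 h5]]].
  have hQ := (proj2 (he (FP x)) h4).
  apply: (uf_up hq (uf_and hq hQ h)) => c [hc1 hc2]; apply: h5.
  exact: (keyM h1 h2 h3 hc2 hc1).
left; apply: ue_of_sub => //; first by move=> A; exact: (classic (A fg_one)).
move=> A hA; apply: (uf_up hq h) => x hx.
by have -> : x = fg_one by apply: NNPP.
Qed.

End P.

Lemma split_sizes (T : Type) (c u v : seq T) : c = u ++ v ->
  v = drop (size c - size v) c /\ u = take (size c - size v) c.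
Proof.
move=> ->; rewrite size_cat addnK; split.
  by rewrite drop_size_cat.
by rewrite take_size_cat.
Qed.

Section L.
Variable p : set_ FG -> Prop.
Hypothesis Hp : ultrafilter p.
Hypothesis Hv : very_strongly_productive p.
Variables q r : set_ FG -> Prop.
Hypothesis Hq : ultrafilter q.
Hypothesis Hr : ultrafilter r.
Hypothesis He : uf_eq (uf_mul q r) p.

Definition Sset (h g : seq letter) (a : nat -> seq nat) (t : FG) :=
  exists t2, wd t = h ++ t2 /\ exists bs, fin_index bs /\ g ++ t2 = map pos (flatten (map a bs)).

Lemma star B K : p B -> exists x a h g,
  [/\ (forall n, fin_index (a n)), (forall n, last 0 (a n) < head 0 (a n.+1)),
      (forall n, x n = seq_prod gen (a n)),
      (forall bs, fin_index bs -> B (seq_prod x bs) /\ forall i, i \in flatten (map a bs) -> K < i)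
    & r (Sset h g a)].
Proof.
move=> hB.
have /(vsp' Hv) [x [a [h1 h2 h3 h4 h5]]] := uf_and Hp hB (p_abv Hp Hv K).
have hQ := proj2 (He (FP x)) h4.
have [c hc] := uf_ne Hq hQ.
pose Q := fun k t => exists u v t2,
   [/\ wd c = u ++ v, size v = k, wd t = winv v ++ t2 &
       exists bs, fin_index bs /\ u ++ t2 = map pos (flatten (map a bs))].
have hfin : forall t, FP x (fg_mul c t) -> exists k, k <= size (wd c) /\ Q k t.
  move=> t ht; have [bs [hbs Eb]] := FP_wd h3 ht.
  have [u [v [t2 [E1 E2 E3]]]] := cancel_split (proj2_sig c) (proj2_sig t).
  exists (size v); split; first by rewrite /wd E1 size_cat leq_addl.
  exists u, v, t2; split => //; exists bs; split => //; rewrite -E3 -Eb; by [].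
have [k [hk hr]] := uf_fin Hr hc hfin.
exists x, a, (winv (drop (size (wd c) - k) (wd c))), (take (size (wd c) - k) (wd c)).
split => //.
  move=> bs hbs; have [hB1 hB2] := h5 _ (ex_intro _ bs (conj hbs erefl)).
  split => // i hi; apply: hB2; rewrite /idx (wd_blocks _ h3) map_fst_pos //.
apply: (uf_up Hr hr) => t [u [v [t2 [E1 E2 E3 E4]]]].
have [Ev Eu] := split_sizes E1; rewrite E2 in Ev Eu.
by exists t2; rewrite -Ev -Eu; split.
Qed.

Definition C i := r (fun t => i \in idx t).

Lemma Cbit i : r (fun t => i \in idx t <-> C i).
Proof.
case: (uf_dich Hr (fun t => i \in idx t)) => h.
  by apply: (uf_up Hr h) => t ht; split.
apply: (uf_up Hr h) => t ht; split => // hc; exfalso; exact: (uf_notboth Hr hc h).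
Qed.

Lemma Cfin K : r (fun t => forall i, i <= K -> (i \in idx t <-> C i)).
Proof.
elim: K => [|K IH].
  by apply: (uf_up Hr (Cbit 0)) => t ht i; rewrite leqn0 => /eqP->.
apply: (uf_up Hr (uf_and Hr IH (Cbit K.+1))) => t [h1 h2] i.
rewrite leq_eqVlt => /orP[/eqP->|] //; rewrite ltnS; exact: h1.
Qed.


Lemma unbounded_false : (forall K, exists i, K < i /\ C i) -> False.
Proof.
move=> hub.
have hB : p (fun z => ~ Good C z) := uf_not Hp (@p_notGood p Hv C).
have [x [a [h [g [h1 h2 h3 hbs hS]]]]] := star 0 hB.
set N0 := sumn (map fst h) + sumn (map fst g).
have [i0 [hi0 Ci0]] := hub (last 0 (a N0)).
have hN0 : N0 <= last 0 (a N0) by apply: bl_last_ge.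
have nh : forall i, N0 < i -> i \notin map fst h.
  move=> i hi; apply/negP => /leq_sumn_mem hh.
  by have := leq_ltn_trans (leq_trans hh (leq_addr _ _)) hi; rewrite ltnn.
have ng : forall i, N0 < i -> i \notin map fst g.
  move=> i hi; apply/negP => /leq_sumn_mem hh.
  by have := leq_ltn_trans (leq_trans hh (leq_addl _ _)) hi; rewrite ltnn.
have inblk : forall t i, Sset h g a t -> N0 < i -> i \in idx t ->
    exists bs, fin_index bs /\ (forall j, N0 < j -> (j \in idx t <-> j \in flatten (map a bs)))
       /\ i \in flatten (map a bs).
  move=> t i [t2 [Et [bs [hb Eb]]]] hi hit.
  have Eb' := congr1 (map fst) Eb; rewrite map_cat map_fst_pos in Eb'.
  have key : forall j, N0 < j -> (j \in idx t <-> j \in flatten (map a bs)).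
    move=> j hj; rewrite /idx Et map_cat mem_cat -Eb' mem_cat.
    by rewrite (negbTE (nh j hj)) (negbTE (ng j hj)).
  by exists bs; split => //; split => //; apply/key.
have hi0N : N0 < i0 by apply: leq_ltn_trans hN0 hi0.
have [t1 [S1 F1]] := uf_ne Hr (uf_and Hr hS (Cfin i0)).
have [bs1 [_ [_ hin1]]] := inblk t1 i0 S1 hi0N (proj2 (F1 i0 (leqnn _)) Ci0).
have [n hn hi0n] := flatten_mapP hin1.
have hNn : N0 < n.
  rewrite ltnNge; apply/negP => hle.
  case/andP: (bl_bounds h1 hi0n) => _ hl.
  by have := leq_trans hl (bl_last_mono h1 h2 hle); rewrite leqNgt hi0.
have [t2 [S2 F2]] := uf_ne Hr (uf_and Hr hS (Cfin (last 0 (a n)))).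
have hi0l : i0 <= last 0 (a n) by case/andP: (bl_bounds h1 hi0n).
have [bs2 [hb2 [key2 hin2]]] := inblk t2 i0 S2 hi0N (proj2 (F2 i0 hi0l) Ci0).
have [m hm hi0m] := flatten_mapP hin2.
have emn := bl_uniq h1 h2 hi0m hi0n; subst m.
have hgood : Good C (seq_prod x [:: n]).
  exists (a n); split; first by rewrite (wd_blocks _ h3) /= cats0.
  move=> i hh hl.
  have hiN : N0 < i.
    apply: leq_ltn_trans hN0 (leq_trans (bl_lt h1 h2 hNn) hh).
  rewrite -(F2 i hl) (key2 i hiN); split.
    by move=> hi; apply/flatten_mapP; exists n.
  case/flatten_mapP => m' hm' him'.
  suff -> : n = m' by [].
  case: (ltngtP n m') => // hc; exfalso.
    case/andP: (bl_bounds h1 him') => hh' _.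
    by have := leq_ltn_trans hl (leq_trans (bl_lt h1 h2 hc) hh'); rewrite ltnn.
  case/andP: (bl_bounds h1 him') => _ hl'.
  by have := leq_ltn_trans hl' (leq_trans (bl_lt h1 h2 hc) hh); rewrite ltnn.
have hfi : fin_index [:: n] by split.
exact: (proj1 (hbs _ hfi) hgood).
Qed.


Hypothesis Hnp : nonprincipal r.
Hypothesis HI : r (fun g => all snd (wd g) /\ sorted ltn (idx g)).

Lemma hprops K1 (hK1 : forall i, C i -> i <= K1) a h g :
  (forall bs, fin_index bs -> forall i, i \in flatten (map a bs) -> K1 < i) ->
  r (Sset h g a) ->
  [/\ all snd h, sorted ltn (map fst h) & forall i, i \in map fst h <-> C i].
Proof.
move=> hb hS; set K3 := K1 + sumn (map fst h).
have [t [[[t2 [Et [bs [hbs Eb]]]] [Ha Hs]] F]] := uf_ne Hr (uf_and Hr (uf_and Hr hS HI) (Cfin K3)).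
rewrite /idx Et map_cat in Hs; rewrite Et all_cat in Ha.
have Eb' := congr1 (map fst) Eb; rewrite map_cat map_fst_pos in Eb'.
split; first by case/andP: Ha.
  exact: (cat_sorted2 Hs).1.
move=> i; split => hi.
  apply/(F i); first exact: leq_trans (leq_sumn_mem hi) (leq_addl _ _).
  by rewrite /idx Et map_cat mem_cat hi.
have hiK := hK1 _ hi.
have := proj2 (F i (leq_trans hiK (leq_addr _ _))) hi.
rewrite /idx Et map_cat mem_cat => /orP[] // hi2.
have : i \in flatten (map a bs) by rewrite -Eb' mem_cat hi2 orbT.
by move/(hb _ hbs); rewrite ltnNge hiK.
Qed.

Lemma bounded_case K1 (hK1 : forall i, C i -> i <= K1) :
  exists w, uf_eq r (uf_mul (principal w) p).
Proof.
have [x0 [a0 [h0 [g0 [_ _ _ hbs0 hS0]]]]] := star K1 (uf_T Hp).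
have [hp0 hs0 hm0] := hprops hK1 (fun bs hb => proj2 (hbs0 bs hb)) hS0.
exists (exist _ h0 (allsnd_isred hp0)).
set w := exist _ h0 _.
apply: ue_of_sub => //; first by move=> A; exact: (uf_dich Hp (ltrans w A)).
move=> A hA.
have [x [a [h [g [h1 h2 h3 hbs hS]]]]] := star K1 hA.
have [hp hs hm] := hprops hK1 (fun bs hb => proj2 (hbs bs hb)) hS.
have Eh : h = h0.
  rewrite (posw hp) (posw hp0); congr (map pos _).
  apply: (irr_sorted_eq ltn_trans ltnn) => // i.
  by apply/idP/idP => hi; [apply/(hm0 i); apply/(hm i) | apply/(hm i); apply/(hm0 i)].
subst h.
set N := K1 + sumn (map fst g).
set K3 := last 0 (a N).
have hN : N <= K3 by apply: bl_last_ge.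
apply: (uf_up Hr (uf_and Hr (uf_and Hr hS (Cfin K3)) (uf_nonprinc Hr w Hnp))).
move=> t [[[t2 [Et [bs [hb Eb]]]] F] hne].
have Eb' := congr1 (map fst) Eb; rewrite map_cat map_fst_pos in Eb'.
have hpos2 : all snd t2.
  by have := all_snd_pos (flatten (map a bs)); rewrite -Eb all_cat => /andP[].
have hbig : forall i, i \in map fst t2 -> K3 < i.
  move=> i hi; have hK : K1 < i.
    by apply: (proj2 (hbs _ hb)); rewrite -Eb' mem_cat hi orbT.
  rewrite ltnNge; apply/negP => hle.
  have : C i by apply/(F i hle); rewrite /idx Et map_cat mem_cat hi orbT.
  by move/hK1; rewrite leqNgt hK.
have Ef := congr1 (filter (fun i => K3 < i)) Eb'.
rewrite filter_cat bl_filter_gt // in Ef.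
rewrite (_ : [seq i <- map fst g | K3 < i] = [::]) in Ef; last first.
  apply/eqP; apply: negbNE; rewrite -has_filter; apply/hasPn => i hi.
  rewrite -leqNgt; apply: leq_trans hN.
  exact: leq_trans (leq_sumn_mem hi) (leq_addl _ _).
rewrite /= (_ : [seq i <- map fst t2 | K3 < i] = map fst t2) in Ef; last first.
  by apply/all_filterP/allP => i /hbig.
set b2 := [seq n <- bs | N < n] in Ef.
have hb2 : b2 <> [::].
  move=> e; apply: hne; apply: fg_eq; rewrite /wd /= -/(wd t) Et (posw hpos2) Ef e /= cats0.
  by [].
have hfi : fin_index b2.
  split => //; apply: sorted_filter; [exact: ltn_trans | by case: hb].
have := proj1 (hbs _ hfi); rewrite /ltrans.
suff -> : fg_mul w (seq_prod x b2) = t by [].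
apply: fg_eq; rewrite /fg_mul /fg_of /wd /= -/(wd (seq_prod x b2)) (wd_blocks _ h3) -Ef -posw //.
by rewrite -Et reduce_id //; exact: (proj2_sig t).
Qed.

Lemma lemL : exists w, uf_eq r (uf_mul (principal w) p).
Proof.
case: (classic (exists K1, forall i, C i -> i <= K1)) => [[K1 hK1]|hn].
  exact: bounded_case hK1.
exfalso; apply: unbounded_false => K; apply: NNPP => hK; apply: hn; exists K.
move=> i Ci; rewrite leqNgt; apply/negP => hi; apply: hK; by exists i.
Qed.

End L.

Lemma fg_cancel_l c y : fg_mul c (fg_mul (fg_inv c) y) = y.
Proof. by rewrite -fg_mulA fg_mulV fg_mul1g. Qed.
Lemma fg_cancel_l' c y : fg_mul (fg_inv c) (fg_mul c y) = y.
Proof. by rewrite -fg_mulA fg_mulVg fg_mul1g. Qed.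
Lemma fg_cancel_r x c : fg_mul (fg_mul x c) (fg_inv c) = x.
Proof. by rewrite fg_mulA fg_mulV fg_mulg1. Qed.
Lemma fg_cancel_m x c y : fg_mul (fg_mul x c) (fg_mul (fg_inv c) y) = fg_mul x y.
Proof. by rewrite fg_mulA fg_cancel_l. Qed.

Lemma not_nonprinc U : ~ nonprincipal U -> exists w, uf_eq U (principal w).
Proof.
move=> h; apply: NNPP => hn; apply: h => w hw; apply: hn; by exists w.
Qed.

Section Main.
Variables p q r : set_ FG -> Prop.
Hypothesis Hp : ultrafilter p.
Hypothesis Hv : very_strongly_productive p.
Hypothesis Hq : ultrafilter q.
Hypothesis Hr : ultrafilter r.
Hypothesis He : uf_eq (uf_mul q r) p.

Lemma case_principal y0 : uf_eq r (principal y0) ->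
  uf_eq q (uf_mul p (principal (fg_inv y0))).
Proof.
move=> hy A; rewrite /uf_mul /principal /ltrans.
rewrite -He /uf_mul; apply: uf_iff => // x.
by rewrite hy /principal /ltrans fg_cancel_r.
Qed.

Lemma step_q w : uf_eq r (uf_mul (principal w) p) ->
  uf_eq q (uf_mul p (principal (fg_inv w))) \/ uf_eq q (principal (fg_inv w)).
Proof.
move=> hw.
set q2 := uf_mul q (principal w).
have hq2 : ultrafilter q2 by exact: (uf_img (fun x => fg_mul x w) Hq).
have e2 : uf_eq (uf_mul q2 p) p.
  move=> A; rewrite -He /uf_mul /q2 /uf_mul /principal; apply: uf_iff => // x.
  by rewrite hw /uf_mul /principal /ltrans; apply: uf_iff => // z; rewrite fg_mulA.
have hq : forall A, q A <-> q2 (fun z => A (fg_mul z (fg_inv w))).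
  move=> A; rewrite /q2 /uf_mul /principal /ltrans; apply: uf_iff => // x.
  by rewrite fg_cancel_r.
case: (lemM Hp Hv hq2 e2) => h; [right|left] => A; rewrite hq h //.
by rewrite /principal fg_mul1g.
Qed.

Lemma step_r : nonprincipal r -> exists w, uf_eq r (uf_mul (principal w) p).
Proof.
move=> hnp.
set Ipos := fun g => all snd (wd g) /\ sorted ltn (idx g).
have hQ := proj2 (He Ipos) (p_Ipos Hp Hv).
have [a ha] := uf_ne Hq hQ.
pose Qk := fun k y => exists u v t2,
  [/\ wd a = u ++ v, size v = k, wd y = winv v ++ t2 & all snd (u ++ t2) /\ sorted ltn (map fst (u ++ t2))].
have hfin : forall y, Ipos (fg_mul a y) -> exists k, k <= size (wd a) /\ Qk k y.
  move=> y [hy1 hy2].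
  have [u [v [t2 [E1 E2 E3]]]] := cancel_split (proj2_sig a) (proj2_sig y).
  exists (size v); split; first by rewrite /wd E1 size_cat leq_addl.
  exists u, v, t2; split => //; rewrite -E3; by [].
have [k [hk hr]] := uf_fin Hr ha hfin.
set vk := drop (size (wd a) - k) (wd a).
set c := fg_of (winv vk).
set r1 := uf_mul (principal (fg_inv c)) r.
set q1 := uf_mul q (principal c).
have hr1 : ultrafilter r1 by exact: (uf_img (fun y => fg_mul (fg_inv c) y) Hr).
have hq1 : ultrafilter q1 by exact: (uf_img (fun x => fg_mul x c) Hq).
have e1 : uf_eq (uf_mul q1 r1) p.
  move=> A; rewrite -He /uf_mul /q1 /r1 /uf_mul /principal /ltrans.
  apply: uf_iff => // x; apply: uf_iff => // y; by rewrite fg_cancel_m.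
have hrr1 : forall A, r A <-> r1 (fun z => A (fg_mul c z)).
  move=> A; rewrite /r1 /uf_mul /principal /ltrans; apply: uf_iff => // y.
  by rewrite fg_cancel_l.
have np1 : nonprincipal r1.
  move=> t0 ht0; apply: (hnp (fg_mul c t0)) => A; rewrite hrr1 ht0 //.
have hI1 : r1 Ipos.
  rewrite /r1 /uf_mul /principal /ltrans; apply: (uf_up Hr hr).
  move=> y [u [v [t2 [E1 E2 E3 [E4 E5]]]]].
  have [Ev _] := split_sizes E1; rewrite E2 -/vk in Ev; rewrite Ev in E3.
  move: E4; rewrite all_cat => /andP[_ hp2].
  rewrite map_cat in E5; have hs2 := (cat_sorted2 E5).2.
  pose t0 : FG := exist _ t2 (allsnd_isred hp2).
  have -> : y = fg_mul c t0.
    apply: fg_eq; rewrite /fg_mul /fg_of /wd /= reduce_catl -E3 reduce_id //.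
    exact: (proj2_sig y).
  by rewrite fg_cancel_l'.
have [w1 hw1] := lemL Hp Hv hq1 hr1 e1 np1 hI1.
exists (fg_mul c w1) => A; rewrite hrr1 hw1 /uf_mul /principal /ltrans.
by apply: uf_iff => // z; rewrite fg_mulA.
Qed.

End Main.

Theorem mainTheorem18 (p q r : set_ FG -> Prop) :
  ultrafilter p -> p inS -> very_strongly_productive p ->
  ultrafilter q -> ultrafilter r ->
  uf_eq (uf_mul q r) p ->
  (exists w : FG,
     (uf_eq r (uf_mul (principal w) p) /\
      uf_eq q (uf_mul p (principal (fg_inv w))))
  \/ (uf_eq r (principal w) /\
      uf_eq q (uf_mul p (principal (fg_inv w))))
  \/ (uf_eq r (uf_mul (principal w) p) /\
      uf_eq q (principal (fg_inv w))))
  /\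
  (nonprincipal q -> nonprincipal r ->
   exists w : FG,
     uf_eq r (uf_mul (principal w) p) /\
     uf_eq q (uf_mul p (principal (fg_inv w)))).
Proof.
move=> Hp _ Hv Hq Hr He.
have part1 : exists w : FG,
     (uf_eq r (uf_mul (principal w) p) /\
      uf_eq q (uf_mul p (principal (fg_inv w))))
  \/ (uf_eq r (principal w) /\
      uf_eq q (uf_mul p (principal (fg_inv w))))
  \/ (uf_eq r (uf_mul (principal w) p) /\
      uf_eq q (principal (fg_inv w))).
  case: (classic (nonprincipal r)) => hnp.
    have [w hw] := step_r Hp Hv Hq Hr He hnp.
    exists w; case: (step_q Hp Hv Hq He hw) => h.
      by left.
    by right; right.
  have [y0 hy0] := not_nonprinc hnp.
  exists y0; right; left; split => //; exact: (case_principal Hq He hy0).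
split => // nq nr.
have [w [[h1 h2]|[[h1 h2]|[h1 h2]]]] := part1.
- by exists w.
- by exfalso; apply: (nr w).
- by exfalso; apply: (nq (fg_inv w)).
Qed.
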